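(* Let $\Sigma=\{a_1,a_2,c\}$. For $k<m$ in $\mathbb{N}$ let $L_{k,m}$ be the set of trees obtained from $t_c$ by grafting some tree $t'\in L_{\neg a_1\vee\neg a_2}$ on node $l^k r$ and grafting $t_{a_1}$ on node $l^m$; let $L_m:=\bigcup_{k<m}L_{k,m}$ and $L^{fa}:=\bigcup_{m\in\mathbb{N}}L_m$. Then there is a finitely ambiguous parity tree automaton that accepts $L^{fa}$.
   Context: Trees over $\Sigma$ are functions $t:\{l,r\}^*\to\Sigma$; $t_\sigma$ is the tree with all nodes labeled $\sigma$; grafting $t_2$ on node $v$ in $t_1$ replaces the subtree of $t_1$ rooted at $v$ by $t_2$. $L_{\neg a_1\vee\neg a_2}$ is the set of trees over $\Sigma$ with no $a_1$-labeled node or with no $a_2$-labeled node. A parity tree automaton (PTA) $\mathcal{A}=(Q,\Sigma,Q_I,\delta,\mathbb{C})$ ($Q$ finite, $Q_I\subseteq Q$, $\delta\subseteq Q\times\Sigma\times Q\times Q$, $\mathbb{C}:Q\to\mathbb{N}$) has computations $\phi:\{l,r\}^*\to Q$ with $\phi(\epsilon)\in Q_I$, $(\phi(v),t(v),\phi(vl),\phi(vr))\in\delta$, accepting if on every branch the largest color seen infinitely often is even. It is finitely ambiguous if on every tree it has finitely many accepting computations. *)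

(* Defs.v *)
From mathcomp Require Import all_boot.
From Stdlib Require List.
Set Implicit Arguments. Unset Strict Implicit. Unset Printing Implicit Defensive.

(* Directions: dl = l (false), dr = r (true). Nodes are words in {l,r}^*,
   written left to right from the root: the child vl of v is rcons v dl. *)
Definition dir := bool.
Definition dl : dir := false.
Definition dr : dir := true.
Definition node := seq dir.

Definition tree (Sigma : Type) := node -> Sigma.

Definition tconst (Sigma : Type) (s : Sigma) : tree Sigma := fun _ => s.

Definition graft (Sigma : Type) (t1 : tree Sigma) (v : node) (t2 : tree Sigma)
  : tree Sigma :=
  fun w => if prefix v w then t2 (drop (size v) w) else t1 w.

Record PTA (Sigma : Type) := {
  pta_Q : finType;
  pta_init : pta_Q -> Prop;
  pta_delta : pta_Q -> Sigma -> pta_Q -> pta_Q -> Prop;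
  pta_col : pta_Q -> nat
}.

Definition computation (Sigma : Type) (A : PTA Sigma) (t : tree Sigma)
  (phi : node -> pta_Q A) : Prop :=
  @pta_init _ A (phi [::]) /\
  forall v : node, @pta_delta _ A (phi v) (t v) (phi (rcons v dl)) (phi (rcons v dr)).

Definition branch_node (b : nat -> dir) (n : nat) : node := mkseq b n.

Definition parity_ok (Sigma : Type) (A : PTA Sigma) (phi : node -> pta_Q A)
  (b : nat -> dir) : Prop :=
  exists m : nat, ~~ odd m /\
    (forall N, exists n, N <= n /\ @pta_col _ A (phi (branch_node b n)) = m) /\
    (exists N, forall n, N <= n -> @pta_col _ A (phi (branch_node b n)) <= m).

Definition accepting (Sigma : Type) (A : PTA Sigma) (t : tree Sigma)
  (phi : node -> pta_Q A) : Prop :=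
  @computation _ A t phi /\ forall b : nat -> dir, @parity_ok _ A phi b.

Definition accepts (Sigma : Type) (A : PTA Sigma) (t : tree Sigma) : Prop :=
  exists phi, @accepting _ A t phi.

Definition finitely_ambiguous (Sigma : Type) (A : PTA Sigma) : Prop :=
  forall t : tree Sigma, exists l : seq (node -> pta_Q A),
    forall phi, @accepting _ A t phi -> List.In phi l.

Inductive Sig := a1 | a2 | c.

Definition L_neg (t : tree Sig) : Prop :=
  (forall v, t v <> a1) \/ (forall v, t v <> a2).

Definition L_km (k m : nat) (t : tree Sig) : Prop :=
  exists t' : tree Sig, L_neg t' /\
    forall v, t v = graft (graft (tconst c) (rcons (nseq k dl) dr) t')
                          (nseq m dl) (tconst a1) v.

Definition L_m (m : nat) (t : tree Sig) : Prop := exists k, k < m /\ L_km k m t.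

Definition L_fa (t : tree Sig) : Prop := exists m, L_m m t.

(* Main.v *)
Require Import Defs.
From mathcomp Require Import all_boot.
From HB Require Import structures.
From mathcomp Require Import zify.
From Stdlib Require Import Classical FunctionalExtensionality.
Set Implicit Arguments. Unset Strict Implicit. Unset Printing Implicit Defensive.

Inductive St := S0 | S1 | CC | N1 | N2 | AA.
Definition st2o (q : St) : 'I_6 :=
  inord (match q with S0 => 0 | S1 => 1 | CC => 2 | N1 => 3 | N2 => 4 | AA => 5 end).
Definition o2st (i : 'I_6) : option St :=
  match nat_of_ord i with 0 => Some S0 | 1 => Some S1 | 2 => Some CC | 3 => Some N1
  | 4 => Some N2 | 5 => Some AA | _ => None end.
Lemma st2oK : pcancel st2o o2st.
Proof. by case; rewrite /o2st /st2o inordK. Qed.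
HB.instance Definition _ := Finite.copy St (pcan_type st2oK).

Definition isSpine q := match q with S0 | S1 => true | _ => false end.
Definition isS1 q := match q with S1 => true | _ => false end.

Definition delta (q : St) (x : Sig) (q1 q2 : St) : Prop :=
  match q with
  | S0 => x = c /\ ((q1 = S0 /\ q2 = CC) \/ (q1 = S1 /\ (q2 = N1 \/ q2 = N2)))
  | S1 => (x = c /\ q1 = S1 /\ q2 = CC) \/ (x = a1 /\ q1 = AA /\ q2 = AA)
  | CC => x = c /\ q1 = CC /\ q2 = CC
  | N1 => x <> a1 /\ q1 = N1 /\ q2 = N1
  | N2 => x <> a2 /\ q1 = N2 /\ q2 = N2
  | AA => x = a1 /\ q1 = AA /\ q2 = AA
  end.

Definition Aut : PTA Sig := {| pta_Q := St; pta_init := fun q => q = S0;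
  pta_delta := delta; pta_col := fun q => if isSpine q then 1 else 0 |}.

Fixpoint shape (w : node) : nat * bool :=
  match w with [::] => (0, false)
  | d :: w' => if d then (0, true) else ((shape w').1.+1, (shape w').2) end.

Definition run (k : nat) (b : bool) (m : nat) (w : node) : St :=
  let (j, f) := shape w in
  if f then (if j == k then (if b then N1 else N2) else if j < m then CC else AA)
  else (if j <= k then S0 else if j <= m then S1 else AA).

Lemma shape_l j : shape (nseq j dl) = (j, false).
Proof. by elim: j => //= j ->. Qed.
Lemma shape_r j u : shape (nseq j dl ++ dr :: u) = (j, true).
Proof. by elim: j => //= j ->. Qed.
Lemma runL k b m j : run k b m (nseq j dl) = if j <= k then S0 else if j <= m then S1 else AA.
Proof. by rewrite /run shape_l. Qed.
Lemma runR k b m j u : run k b m (nseq j dl ++ dr :: u) =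
  if j == k then (if b then N1 else N2) else if j < m then CC else AA.
Proof. by rewrite /run shape_r. Qed.

Lemma node_cases (v : node) : (exists j, v = nseq j dl) \/ (exists j u, v = nseq j dl ++ dr :: u).
Proof.
elim: v => [|d v IH]; first by left; exists 0.
case: d.
  by right; exists 0, v.
case: IH => [[j ->]|[j [u ->]]]; first by left; exists j.+1.
by right; exists j.+1, u.
Qed.

Lemma rcons_l j : rcons (nseq j dl) dl = nseq j.+1 dl.
Proof. by elim: j => //= j ->. Qed.
Lemma rcons_r j : rcons (nseq j dl) dr = nseq j dl ++ dr :: [::].
Proof. by rewrite cats1. Qed.
Lemma rcons_ru j u d : rcons (nseq j dl ++ dr :: u) d = nseq j dl ++ dr :: rcons u d.
Proof. by rewrite rcons_cat. Qed.

Lemma P1 m j : prefix (nseq m dl) (nseq j dl) = (m <= j).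
Proof. by elim: m j => [|m IH] [|j] //=; rewrite IH. Qed.
Lemma P2 m j u : prefix (nseq m dl) (nseq j dl ++ dr :: u) = (m <= j).
Proof. by elim: m j => [|m IH] [|j] //=; rewrite IH. Qed.
Lemma P3 k j : prefix (rcons (nseq k dl) dr) (nseq j dl) = false.
Proof. by elim: k j => [|k IH] [|j] //=; rewrite IH. Qed.
Lemma P4 k j u : prefix (rcons (nseq k dl) dr) (nseq j dl ++ dr :: u) = (j == k).
Proof. elim: k j => [|k IH] [|j] //=; rewrite ?IH //; by case: u. Qed.
Lemma D4 k u : drop (size (rcons (nseq k dl) dr)) (nseq k dl ++ dr :: u) = u.
Proof. rewrite size_rcons size_nseq; elim: k => [|k IH] /=; [exact: drop0 | exact: IH]. Qed.

Lemma test j k : (j <= k) = false -> k < j.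
Proof. move=> H. lia. Qed.
Lemma test2 j k : k < j -> (j <= k) = false.
Proof. move=> H. lia. Qed.

Lemma labL k m (t' : tree Sig) j :
  graft (graft (tconst c) (rcons (nseq k dl) dr) t') (nseq m dl) (tconst a1) (nseq j dl)
  = if m <= j then a1 else c.
Proof. by rewrite /graft P1 P3; case: ifP. Qed.

Lemma labR k m (t' : tree Sig) j u :
  graft (graft (tconst c) (rcons (nseq k dl) dr) t') (nseq m dl) (tconst a1) (nseq j dl ++ dr :: u)
  = if m <= j then a1 else if j == k then t' u else c.
Proof.
rewrite /graft P2 P4; case: ifP => // _; case: eqP => // ->; by rewrite D4.
Qed.

Lemma run_acc k b m (t t' : tree Sig) : k < m ->
  (forall u, t' u <> (if b then a1 else a2)) ->
  (forall v, t v = graft (graft (tconst c) (rcons (nseq k dl) dr) t') (nseq m dl) (tconst a1) v) ->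
  accepting (A := Aut) t (run k b m).
Proof.
move=> Hkm Ht' Ht; split.
  split; first by rewrite /= /run.
  move=> v; case: (node_cases v) => [[j ->]|[j [u ->]]].
    rewrite rcons_l rcons_r !runL runR Ht labL /=.
    case: b Ht' => Ht'; repeat (case: ifP => ?); simpl; first [lia | intuition congruence].
  rewrite !rcons_ru !runR Ht labR /=.
  case: b Ht' => Ht'; repeat (case: ifP => ?); simpl; first [lia | intuition congruence].
move=> br; exists 0; split => //.
have H0 : forall n, m < n -> (if isSpine (run k b m (branch_node br n)) then 1 else 0) = 0.
  move=> n Hn.
  have Hs : size (branch_node br n) = n by rewrite /branch_node size_mkseq.
  move: Hs; case: (node_cases (branch_node br n)) => [[j ->]|[j [u ->]]].
    rewrite size_nseq => Hj; rewrite runL.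
    have -> : (j <= k) = false by lia. have -> : (j <= m) = false by lia. done.
  move=> _; rewrite runR; case: (j == k); first by case: b Ht'. by case: (j < m).
split.
  move=> N; exists (maxn N m.+1); split; first lia.
  by apply: H0; lia.
by exists m.+1 => n Hn; rewrite /= H0.
Qed.

Lemma run_L k b m t : k < m -> computation (A := Aut) t (run k b m) -> L_km k m t.
Proof.
move=> Hkm [_ Hc].
exists (fun u => t (nseq k dl ++ dr :: u)); split.
  case: b Hc => Hc; [left|right] => u; have := Hc (nseq k dl ++ dr :: u);
    rewrite !rcons_ru !runR eqxx /=; tauto.
move=> v; case: (node_cases v) => [[j ->]|[j [u ->]]].
  have := Hc (nseq j dl); rewrite labL rcons_l rcons_r !runL runR /=.
  case: b Hc => Hc; repeat (case: ifP => ?); simpl; first [lia | intuition congruence].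
have := Hc (nseq j dl ++ dr :: u); rewrite labR !rcons_ru !runR /=.
case: (eqVneq j k) => [->|_].
  by rewrite (_ : (m <= k) = false); [case: b Hc | lia].
case: b Hc => Hc; repeat (case: ifP => ?); simpl; first [lia | intuition congruence].
Qed.

Lemma Lkm_spine k m t j : L_km k m t -> t (nseq j dl) = if m <= j then a1 else c.
Proof. by case=> t' [_ Ht]; rewrite Ht labL. Qed.

Lemma Lkm_m k m k' m' t : L_km k m t -> L_km k' m' t -> m = m'.
Proof.
move=> H H'.
have E1 := Lkm_spine m H; have E2 := Lkm_spine m H'.
have E3 := Lkm_spine m' H; have E4 := Lkm_spine m' H'.
rewrite leqnn /= in E1 E4.
rewrite leqnn /= in E4.
case: (ltngtP m m') => // Hlt.
  have F : (m' <= m) = false by lia.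
  by move: E2; rewrite E1 F.
have F : (m <= m') = false by lia.
by move: E3; rewrite E4 F.
Qed.

Lemma closedP q x q1 q2 : ~~ isSpine q -> delta q x q1 q2 -> q1 = q /\ q2 = q.
Proof. by case: q => // _ /= [_ [-> ->]]. Qed.

Lemma spine_S0 q : isSpine q -> ~~ isS1 q -> q = S0.
Proof. by case: q. Qed.

Lemma bn0 n : branch_node (fun _ => dl) n = nseq n dl.
Proof.
apply: (@eq_from_nth _ dl); rewrite ?size_mkseq ?size_nseq // => i Hi.
by rewrite nth_mkseq // nth_nseq Hi.
Qed.

Lemma struct t phi : accepting (A := Aut) t phi ->
  exists k b m, k < m /\ forall v, phi v = run k b m v.
Proof.
move=> [[Hi Hc] Hp].
have Hsp n : delta (phi (nseq n dl)) (t (nseq n dl)) (phi (nseq n.+1 dl))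
                   (phi (nseq n dl ++ [:: dr])).
  by have := Hc (nseq n dl); rewrite rcons_l rcons_r.
have Hsp0 : phi (nseq 0 dl) = S0 by [].
have Hcl : forall v q, ~~ isSpine q -> phi v = q -> forall u, phi (v ++ u) = q.
  move=> v q Hq Hv; elim/last_ind => [|u d IH]; first by rewrite cats0.
  rewrite -rcons_cat; have := Hc (v ++ u); rewrite IH => /(closedP Hq) [H1 H2].
  by case: d.
have [mm [Hodd [Hinf _]]] := Hp (fun _ => dl).
have [n0 [_ Hn0]] := Hinf 0.
rewrite bn0 /= in Hn0.
have exP : exists n, ~~ isSpine (phi (nseq n dl)).
  exists n0; move: Hn0 Hodd; case: (isSpine _) => // <- //.
case: (ex_minnP exP) => n Hn Hmin.
have Hspm : forall j, j < n -> isSpine (phi (nseq j dl)).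
  move=> j Hj; apply/negPn/negP => H; have := Hmin _ H; lia.
case: n Hn Hmin Hspm => [|m] Hn Hmin Hspm; first by rewrite Hsp0 in Hn.
have [Hm1 [Hta [HmA HmrA]]] : phi (nseq m dl) = S1 /\ t (nseq m dl) = a1 /\
   phi (nseq m.+1 dl) = AA /\ phi (nseq m dl ++ [:: dr]) = AA.
  move: (Hsp m) (Hspm m (ltnSn m)) Hn; case: (phi (nseq m dl)) => //=.
    by move=> [_ [[-> _]|[-> _]]].
  by move=> [[_ [-> _]]|[Ht [-> ->]]].
have exP2 : exists j, isS1 (phi (nseq j dl)) by exists m; rewrite Hm1.
case: (ex_minnP exP2) => k' Hk' Hmin2.
have Hk'm : k' <= m by apply: Hmin2; rewrite Hm1.
case: k' Hk' Hmin2 Hk'm => [|k] Hk' Hmin2 Hk'm; first by rewrite Hsp0 in Hk'.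
have HS0 : forall j, j <= k -> phi (nseq j dl) = S0.
  move=> j Hj; apply: spine_S0; first by apply: Hspm; lia.
  by apply/negP => H; have := Hmin2 _ H; lia.
have HS1i : forall i, k.+1 + i <= m -> phi (nseq (k.+1 + i) dl) = S1.
  elim=> [|i IH] Hii; first by rewrite addn0; move: Hk'; case: (phi _).
  have := Hsp (k.+1 + i); rewrite IH; last lia.
  rewrite addnS /=; case=> [[_ [-> _]]|[_ [H _]]] //.
  have Hs : isSpine (phi (nseq (k.+1 + i).+1 dl)) by apply: Hspm; lia.
  by rewrite H in Hs.
have HS1 : forall j, k < j <= m -> phi (nseq j dl) = S1.
  move=> j Hj; have -> : j = k.+1 + (j - k.+1) by lia.
  by apply: HS1i; lia.
have [b Hb] : exists b, phi (nseq k dl ++ [:: dr]) = if b then N1 else N2.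
  have := Hsp k; rewrite HS0 // HS1; last lia.
  case=> _ [[H _]|[_ [->|->]]] //; by [exists true | exists false].
have HC : forall j, j < m -> j != k -> phi (nseq j dl ++ [:: dr]) = CC.
  move=> j Hj Hjk; have := Hsp j; case: (ltngtP j k) Hjk => // Hjk _.
    by rewrite HS0 1?HS0 //; [case=> _ [[_ ->]|[H _]] | lia].
  by rewrite HS1 1?HS1 //; [case=> [[_ [_ ->]]|[_ [H _]]] | lia | lia].
have Hbig : forall j w, m < j -> phi (nseq j dl ++ w) = AA.
  move=> j w Hj; have -> : nseq j dl ++ w = nseq m.+1 dl ++ (nseq (j - m.+1) dl ++ w).
    by rewrite catA -nseqD; congr (nseq _ _ ++ _); lia.
  by apply: Hcl.
exists k, b, m; split => // v.
case: (node_cases v) => [[j ->]|[j [u ->]]].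
  rewrite runL; case: (leqP j k) => Hjk; first exact: HS0.
  case: (leqP j m) => Hjm; first by apply: HS1; lia.
  by have := Hbig j [::] Hjm; rewrite cats0.
rewrite runR.
have -> : nseq j dl ++ dr :: u = (nseq j dl ++ [:: dr]) ++ u by rewrite -catA.
case: (eqVneq j k) => [->|Hjk].
  by apply: Hcl; [case: b {Hb} | exact: Hb].
case: (ltnP j m) => Hjm; first by apply: Hcl => //; apply: HC.
case: (ltngtP j m) Hjm => // Hjm _; last by rewrite Hjm; apply: Hcl.
by rewrite -catA; apply: Hbig.
Qed.

Fixpoint runs (m n : nat) : seq (node -> St) :=
  if n is n'.+1 then run n' true m :: run n' false m :: runs m n' else [::].

Lemma in_runs m n k b : k < n -> List.In (run k b m) (runs m n).
Proof.
elim: n => [|n IH] // Hk /=; move: IH.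
case: (ltnP k n) => H IH; first by right; right; apply: IH.
have -> : k = n by lia.
by clear IH; case: b; [left | right; left].
Qed.

Theorem lemma6p3 :
  exists A : PTA Sig,
    finitely_ambiguous A /\ (forall t : tree Sig, accepts A t <-> L_fa t).
Proof.
exists Aut; split.
  move=> t; case: (classic (exists phi, accepting (A := Aut) t phi)) => [[phi0 H0]|Hn];
    last by exists [::] => phi H; exfalso; apply: Hn; exists phi.
  have [k0 [b0 [m0 [Hk0 E0]]]] := struct H0.
  exists (runs m0 m0) => phi H.
  have [k [b [m [Hk E]]]] := struct H.
  have Ephi : phi = run k b m := functional_extensionality _ _ E.
  have Ephi0 : phi0 = run k0 b0 m0 := functional_extensionality _ _ E0.
  have L1 := run_L Hk (_ : computation (A := Aut) t (run k b m)).
  have L0 := run_L Hk0 (_ : computation (A := Aut) t (run k0 b0 m0)).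
  rewrite -Ephi in L1; rewrite -Ephi0 in L0.
  have Emm := Lkm_m (L1 H.1) (L0 H0.1).
  by rewrite Ephi -Emm; apply: in_runs.
move=> t; split.
  case=> phi H; have [k [b [m [Hk E]]]] := struct H.
  have Ephi : phi = run k b m := functional_extensionality _ _ E.
  exists m, k; split => //; apply: (@run_L k b m t Hk); by move: H.1; rewrite Ephi.
case=> m0 [k0 [Hk0 [t' [Hneg Ht]]]].
case: Hneg => Hn.
  by exists (run k0 true m0); apply: (run_acc Hk0 _ Ht).
by exists (run k0 false m0); apply: (run_acc Hk0 _ Ht).
Qed.
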